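(* (Fidelity susceptibility integral.) Let $x_0,\dots,x_q$ be complex numbers (repetitions allowed), $q\ge1$, $0\le j\le q-1$, and $\beta>0$. Then $$\int_0^{\beta/2}\tau\,e^{-\tau[x_{j+1},\ldots,x_q]}\,e^{-(\beta-\tau)[x_0,\ldots,x_j]}\,\mathrm{d}\tau=\sum_{r=0}^{j}e^{-\frac{\beta}{2}[x_0,\ldots,x_r]}\sum_{m=j+1}^{q}e^{-\frac{\beta}{2}[x_r,\ldots,x_q,x_m]}.$$
   Context: For $t\in\mathbb{R}$ and numbers $y_0,\dots,y_p$ (repetitions allowed), $e^{t[y_0,\ldots,y_p]}$ denotes the divided difference of $f(x)=e^{tx}$, $f[y_0,\ldots,y_p]=\frac{1}{2\pi i}\oint_\Gamma\frac{f(x)}{\prod_{i=0}^p(x-y_i)}\,\mathrm{d}x$, $\Gamma$ a positively oriented contour enclosing all $y_i$. The multiset $[x_r,\ldots,x_q,x_m]$ contains $x_m$ twice. *)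

(* Defs.v *)
From Stdlib Require Import Reals List.
From Coquelicot Require Import Coquelicot.
Import ListNotations.
Open Scope R_scope.

Definition cexp (z : C) : C :=
  (exp (Re z) * cos (Im z), exp (Re z) * sin (Im z)).

Definition node_poly (ys : list C) (z : C) : C :=
  fold_right (fun y acc => Cmult (Cminus z y) acc) (RtoC 1) ys.

(* radius of a circle centered at 0 enclosing all points of ys *)
Definition dd_radius (ys : list C) : R :=
  1 + fold_right (fun y acc => Cmod y + acc) 0 ys.

(* Divided difference of f(x) = e^{t x} on the multiset ys:
   (1/(2 pi i)) \oint_Gamma e^{t z} / prod (z - y_i) dz, with Gamma the positively
   oriented circle |z| = dd_radius ys, parametrized by z = rho e^{i theta},
   dz = i rho e^{i theta} d theta (the factor i cancels with 1/i). *)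
Definition exp_dd (t : R) (ys : list C) : C :=
  let rho := dd_radius ys in
  RInt (V := C_R_CompleteNormedModule)
    (fun th : R =>
       let w := (rho * cos th, rho * sin th) : C in
       Cdiv (Cmult (cexp (Cmult (RtoC t) w)) w)
            (Cmult (RtoC (2 * PI)) (node_poly ys w)))
    0 (2 * PI).

Definition pts (x : nat -> C) (a b : nat) : list C := map x (seq a (S b - a)).

(* Main.v *)
Require Import Defs.
From Stdlib Require Import Reals List.
From Coquelicot Require Import Coquelicot.
Import ListNotations.
Open Scope R_scope.
From Stdlib Require Import Lra Lia Permutation Arith.

Lemma Rd_plus (f g : R -> R) (x a b : R) : is_derive f x a -> is_derive g x b ->
  is_derive (fun t => f t + g t) x (a + b).
Proof. intros H1 H2; exact (is_derive_plus f g x a b H1 H2). Qed.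
Lemma Rd_opp (f : R -> R) (x a : R) : is_derive f x a -> is_derive (fun t => - f t) x (- a).
Proof. intros H1; exact (is_derive_opp f x a H1). Qed.
Lemma Rd_minus (f g : R -> R) (x a b : R) : is_derive f x a -> is_derive g x b ->
  is_derive (fun t => f t - g t) x (a - b).
Proof. intros H1 H2; exact (is_derive_plus f (fun t => - g t) x a (-b) H1 (Rd_opp _ _ _ H2)). Qed.
Lemma Rd_mult (f g : R -> R) (x a b : R) : is_derive f x a -> is_derive g x b ->
  is_derive (fun t => f t * g t) x (a * g x + f x * b).
Proof. intros H1 H2; exact (is_derive_mult f g x a b H1 H2 Rmult_comm). Qed.
Lemma Rd_const (c x : R) : is_derive (fun _ => c) x 0.
Proof. exact (is_derive_const c x). Qed.
Lemma Rd_id (x : R) : is_derive (fun t => t) x 1.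
Proof. exact (is_derive_id x). Qed.
Lemma Rd_comp (f g : R -> R) (x a b : R) : is_derive f (g x) a -> is_derive g x b ->
  is_derive (fun t => f (g t)) x (b * a).
Proof. intros H1 H2; exact (is_derive_comp f g x a b H1 H2). Qed.
Lemma Rd_ext (f g : R -> R) (x a b : R) : (forall t, f t = g t) -> a = b -> is_derive f x a -> is_derive g x b.
Proof. intros H -> ; now apply is_derive_ext. Qed.
Lemma Rd_exp x : is_derive exp x (exp x).
Proof. apply is_derive_Reals. apply derivable_pt_lim_exp. Qed.
Lemma Rd_cos x : is_derive cos x (- sin x).
Proof. apply is_derive_Reals. apply derivable_pt_lim_cos. Qed.
Lemma Rd_sin x : is_derive sin x (cos x).
Proof. apply is_derive_Reals. apply derivable_pt_lim_sin. Qed.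

Open Scope C_scope.
Definition CD (f : R -> C) (x : R) (l : C) : Prop :=
  is_derive (fun t => fst (f t)) x (fst l) /\ is_derive (fun t => snd (f t)) x (snd l).

Lemma CD_ext (f g : R -> C) (x : R) (l l' : C) : (forall t, f t = g t) -> l = l' -> CD f x l -> CD g x l'.
Proof.
  intros H -> [H1 H2]; split.
  - eapply (is_derive_ext (fun t => fst (f t))); [intros; now rewrite H|auto].
  - eapply (is_derive_ext (fun t => snd (f t))); [intros; now rewrite H|auto].
Qed.

Lemma CD_const (c : C) (x : R) : CD (fun _ => c) x 0.
Proof. split; apply Rd_const. Qed.

Lemma CD_RtoC (f : R -> R) (x a : R) : is_derive f x a -> CD (fun t => RtoC (f t)) x (RtoC a).
Proof. intros H; split; simpl; [auto| apply Rd_const]. Qed.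

Lemma CD_plus (f g : R -> C) (x : R) (a b : C) : CD f x a -> CD g x b -> CD (fun t => f t + g t) x (a + b).
Proof. intros [] []; split; simpl; now apply Rd_plus. Qed.
Lemma CD_opp (f : R -> C) (x : R) (a : C) : CD f x a -> CD (fun t => - f t) x (- a).
Proof. intros [H1 H2]; split; simpl; now apply Rd_opp. Qed.
Lemma CD_minus (f g : R -> C) (x : R) (a b : C) : CD f x a -> CD g x b -> CD (fun t => f t - g t) x (a - b).
Proof. intros; apply CD_plus; auto; now apply CD_opp. Qed.
Lemma CD_mult (f g : R -> C) (x : R) (a b : C) : CD f x a -> CD g x b -> CD (fun t => f t * g t) x (a * g x + f x * b).
Proof.
  intros [H1 H2] [H3 H4]; split; simpl.
  - eapply (Rd_ext (fun t => fst (f t) * fst (g t) - snd (f t) * snd (g t))%R); 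
      [intros; reflexivity| |apply Rd_minus; apply Rd_mult; eauto]; simpl; ring.
  - eapply (Rd_ext (fun t => fst (f t) * snd (g t) + snd (f t) * fst (g t))%R); 
      [intros; reflexivity| |apply Rd_plus; apply Rd_mult; eauto]; simpl; ring.
Qed.

Lemma CD_inv (f : R -> C) (x : R) (a : C) : f x <> 0 -> CD f x a -> CD (fun t => / f t) x (- (a * / f x * / f x)).
Proof.
  intros Hnz [H1 H2].
  assert (Hd : (fst (f x) * fst (f x) + snd (f x) * snd (f x))%R <> 0%R).
  { intro E; apply Hnz. destruct (f x) as [u v]; simpl in E.
    assert (u = 0%R) by nra. assert (v = 0%R) by nra. subst; reflexivity. }
  assert (HD : is_derive (fun t => fst (f t) * fst (f t) + snd (f t) * snd (f t))%R x
     (fst a * fst (f x) + fst (f x) * fst a + (snd a * snd (f x) + snd (f x) * snd a))%R).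
  { apply Rd_plus; apply Rd_mult; auto. }
  split; simpl.
  - eapply Rd_ext; [| | apply (is_derive_div _ _ x _ _ H1 HD Hd)].
    + intros t; simpl; rewrite !Rmult_1_r; reflexivity.
    + destruct (f x) as [u v]; destruct a as [p q]; simpl in *. field. 
      exact Hd.
  - eapply Rd_ext; [| | apply (is_derive_div _ _ x _ _ (Rd_opp _ _ _ H2) HD Hd)].
    + intros t; simpl; rewrite !Rmult_1_r; reflexivity.
    + destruct (f x) as [u v]; destruct a as [p q]; simpl in *. field.
      exact Hd.
Qed.

Lemma CD_cexp (g : R -> C) (x : R) (a : C) : CD g x a -> CD (fun t => cexp (g t)) x (a * cexp (g x)).
Proof.
  intros [H1 H2]; unfold cexp; split; simpl.
  - eapply Rd_ext; [intros; reflexivity | |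
      apply Rd_mult; [apply (Rd_comp exp); [apply Rd_exp|eauto] | apply (Rd_comp cos); [apply Rd_cos|eauto]]].
    simpl. ring.
  - eapply Rd_ext; [intros; reflexivity | |
      apply Rd_mult; [apply (Rd_comp exp); [apply Rd_exp|eauto] | apply (Rd_comp sin); [apply Rd_sin|eauto]]].
    simpl. ring.
Qed.

Lemma CD_pow (g : R -> C) (x : R) (a : C) n : CD g x a -> CD (fun t => g t ^ n) x (INR n * g x ^ (n - 1) * a).
Proof.
  intros H. induction n as [|m IH].
  - apply (CD_ext (fun _ => RtoC 1) _ _ 0); [intros; reflexivity| |apply CD_const].
    change (INR 0) with 0%R. remember (g x ^ (0 - 1)) as y. 
    unfold RtoC, Cmult; simpl. f_equal; ring.
  - eapply (CD_ext (fun t => g t * g t ^ m) _ _ _ _ (fun t => eq_sym (Cpow_S (g t) m))); [ | apply CD_mult; [exact H| exact IH]].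
    rewrite S_INR. replace (S m - 1)%nat with m by lia.
    destruct m as [|k].
    + change (INR 0) with 0%R. change (g x ^ 0) with (RtoC 1).
      unfold RtoC, Cmult, Cplus; simpl. f_equal; ring.
    + replace (S k - 1)%nat with k by lia. rewrite Cpow_S.
      remember (g x ^ k) as y. remember (g x) as z. remember (INR (S k)) as r.
      replace (RtoC (r + 1)) with (RtoC r + 1) by (unfold RtoC, Cplus; simpl; f_equal; ring).
      ring.
Qed.

Lemma CD_is_derive (f : R -> C) (x : R) (l : C) : CD f x l -> @is_derive R_AbsRing C_R_NormedModule f x l.
Proof.
  intros [H1 H2]. destruct l as [l1 l2].
  unfold is_derive in *.
  pose proof (filterdiff_comp_2 (K:=R_AbsRing) (T:=R_NormedModule) (U:=R_NormedModule) (V:=R_NormedModule) (W:=C_R_NormedModule)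
     (fun t => fst (f t)) (fun t => snd (f t)) (fun a b => (a, b)) _ _ (fun a b => (a,b)) H1 H2) as H.
  eapply filterdiff_ext.
  2: { apply H. apply filterdiff_linear. split.
       - intros [] []; reflexivity.
       - intros k []; reflexivity.
       - exists 1%R; split; [lra|]. intros []. rewrite Rmult_1_l. apply Rle_refl. }
  intros t; simpl; destruct (f t); reflexivity.
Qed.

Lemma is_derive_CD (f : R -> C) (x : R) (l : C) : @is_derive R_AbsRing C_R_NormedModule f x l -> CD f x l.
Proof.
  intros H. split.
  - pose proof (filterdiff_comp (K:=R_AbsRing) (U:=R_NormedModule) (V:=C_R_NormedModule) (W:=R_NormedModule) f (fun c => fst c) _ (fun c => fst c) H) as H'.
    apply H'. apply filterdiff_linear. apply is_linear_fst.
  - pose proof (filterdiff_comp (K:=R_AbsRing) (U:=R_NormedModule) (V:=C_R_NormedModule) (W:=R_NormedModule) f (fun c => snd c) _ (fun c => snd c) H) as H'.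
    apply H'. apply filterdiff_linear. apply is_linear_snd.
Qed.

Lemma CD_cont (f : R -> C) (x : R) (l : C) : CD f x l -> @continuous R_UniformSpace C_R_CompleteNormedModule f x.
Proof.
  intros H. apply CD_is_derive in H.
  apply (ex_derive_continuous (K:=R_AbsRing) (V:=C_R_NormedModule)). eexists; eauto.
Qed.

Lemma CD_zero_const (f : R -> C) : (forall t, CD f t 0) -> forall t, f t = f 0%R.
Proof.
  intros H t. destruct (Rtotal_order t 0) as [Hl|[He|Hg]].
  - apply (eq_is_derive (V:=C_R_NormedModule)); auto. intros; now apply CD_is_derive.
  - now subst.
  - symmetry. apply (eq_is_derive (V:=C_R_NormedModule)); auto. intros; now apply CD_is_derive.
Qed.

Open Scope C_scope.

Lemma Rd_ext' (f g : R -> R) (x a b : R) : is_derive f x a -> (forall t, f t = g t) -> a = b -> is_derive g x b.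
Proof. intros H1 H2 H3; eapply Rd_ext; eauto. Qed.
Lemma CD_ext' (f g : R -> C) (x : R) (l l' : C) : CD f x l -> (forall t, f t = g t) -> l = l' -> CD g x l'.
Proof. intros H1 H2 H3; eapply CD_ext; eauto. Qed.

Lemma CD_comp_lin (f : R -> C) (c d s : R) (a : C) : CD f (c * s + d)%R a ->
  CD (fun u => f (c * u + d)%R) s (RtoC c * a).
Proof.
  intros [H1 H2].
  assert (HL : is_derive (fun u => c * u + d)%R s c).
  { eapply Rd_ext'; [apply Rd_plus; [apply Rd_mult; [apply Rd_const|apply Rd_id]|apply Rd_const]|intros; reflexivity| cbv beta; ring]. }
  split; simpl.
  - eapply Rd_ext'; [apply (Rd_comp (fun t => fst (f t)) _ s _ _ H1 HL)|intros; reflexivity| simpl; ring].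
  - eapply Rd_ext'; [apply (Rd_comp (fun t => snd (f t)) _ s _ _ H2 HL)|intros; reflexivity| simpl; ring].
Qed.

Lemma CD_opp_arg (f : R -> C) (s : R) (a : C) : CD f (- s)%R a -> CD (fun u => f (- u)%R) s (- a).
Proof.
  intros H. assert (H' : CD f (-1 * s + 0)%R a) by (replace (-1 * s + 0)%R with (- s)%R by ring; auto).
  apply (CD_ext (fun u => f (-1*u+0)%R) (fun u => f (-u)%R) s (RtoC (-1) * a) (-a)).
  - intros t. replace (-1 * t + 0)%R with (- t)%R by ring. reflexivity.
  - unfold RtoC, Cmult, Copp; destruct a; simpl; f_equal; ring.
  - apply (CD_comp_lin f (-1) 0 s a H').
Qed.

Lemma CD_id (s : R) : CD (fun u => RtoC u) s 1.
Proof. apply (CD_RtoC (fun u => u)). apply Rd_id. Qed.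

Lemma CD_sum (f : nat -> R -> C) (l : nat -> C) (s : R) (n m : nat) :
  (forall k, (n <= k <= m)%nat -> CD (f k) s (l k)) ->
  CD (fun u => sum_n_m (fun k => f k u) n m) s (sum_n_m l n m).
Proof.
  intros H. induction m as [|m IH].
  - destruct n as [|n].
    + apply (CD_ext (f 0%nat) _ s (l 0%nat)); [intros; symmetry; apply (sum_n_n (fun k => f k t))| symmetry; apply sum_n_n| apply H; lia].
    + apply (CD_ext (fun _ => zero) _ s zero); [intros; symmetry; apply sum_n_m_zero; lia| symmetry; apply sum_n_m_zero; lia| apply CD_const].
  - destruct (le_lt_dec n (S m)) as [Hle|Hlt].
    + apply (CD_ext (fun u => plus (sum_n_m (fun k => f k u) n m) (f (S m) u)) _ s (plus (sum_n_m l n m) (l (S m)))).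
      * intros; symmetry; apply (sum_n_Sm (fun k => f k t)); lia.
      * symmetry; apply sum_n_Sm; lia.
      * apply CD_plus; [apply IH; intros; apply H; lia| apply H; lia].
    + apply (CD_ext (fun _ => zero) _ s zero); [intros; symmetry; apply sum_n_m_zero; lia| symmetry; apply sum_n_m_zero; lia| apply CD_const].
Qed.

Lemma cexp_add (a b : C) : cexp a * cexp b = cexp (a + b).
Proof.
  unfold cexp, Cmult, Cplus; destruct a as [a1 a2]; destruct b as [b1 b2]; simpl.
  rewrite exp_plus, cos_plus, sin_plus. f_equal; ring.
Qed.

Lemma cexp_0 : cexp 0 = 1.
Proof. unfold cexp; simpl. rewrite exp_0, cos_0, sin_0. unfold RtoC; f_equal; ring. Qed.

Lemma CD_cexp_lin (c : C) (s : R) : CD (fun u => cexp (c * RtoC u)) s (c * cexp (c * RtoC s)).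
Proof.
  eapply CD_ext'; [apply CD_cexp; apply CD_mult; [apply CD_const| apply CD_id]|intros; reflexivity| cbv beta; ring].
Qed.

Lemma ode_unique (f : R -> C) (c : C) :
  (forall s, CD f s (c * f s)) -> f 0%R = 0 -> forall s, f s = 0.
Proof.
  intros H H0 s.
  set (g := fun u => cexp (- c * RtoC u) * f u).
  assert (Hg : forall u, CD g u 0).
  { intros u. eapply CD_ext'; [apply CD_mult; [apply CD_cexp_lin| apply H]|intros; reflexivity| cbv beta; ring]. }
  pose proof (CD_zero_const g Hg s) as E. unfold g in E.
  rewrite H0 in E. rewrite Cmult_0_r in E.
  assert (E2 : cexp (c * RtoC s) * (cexp (- c * RtoC s) * f s) = 0) by (rewrite E; ring).
  rewrite Cmult_assoc, cexp_add in E2.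
  replace (c * RtoC s + - c * RtoC s) with (RtoC 0) in E2 by ring.
  rewrite cexp_0, Cmult_1_l in E2. exact E2.
Qed.

Lemma CD_FTC (g : R -> C) (s : R) :
  (forall u, @continuous R_UniformSpace C_R_CompleteNormedModule g u) ->
  CD (fun u => RInt (V:=C_R_CompleteNormedModule) g 0 u) s (g s).
Proof.
  intros Hc. apply is_derive_CD.
  apply (is_derive_RInt (V:=C_R_CompleteNormedModule) g _ 0%R s).
  - apply filter_forall. intros b. apply RInt_correct. apply ex_RInt_continuous. intros; auto.
  - auto.
Qed.

Open Scope C_scope.

Notation CR := C_R_CompleteNormedModule.

Lemma is_RInt_Cmult_l (c : C) (g : R -> C) (a b : R) (I : C) :
  is_RInt (V:=CR) g a b I -> is_RInt (V:=CR) (fun t => c * g t) a b (c * I).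
Proof.
  intros H.
  pose proof (is_RInt_fct_extend_fst (U:=R_NormedModule) (V:=R_NormedModule) g a b I H) as H1.
  pose proof (is_RInt_fct_extend_snd (U:=R_NormedModule) (V:=R_NormedModule) g a b I H) as H2.
  destruct c as [c1 c2]; destruct I as [I1 I2]; simpl in *.
  apply (is_RInt_fct_extend_pair (U:=R_NormedModule) (V:=R_NormedModule)); simpl.
  - apply (is_RInt_minus (V:=R_NormedModule) (fun t => c1 * fst (g t))%R (fun t => c2 * snd (g t))%R).
    + apply (is_RInt_scal (V:=R_NormedModule) (fun t => fst (g t)) a b c1 I1 H1).
    + apply (is_RInt_scal (V:=R_NormedModule) (fun t => snd (g t)) a b c2 I2 H2).
  - apply (is_RInt_plus (V:=R_NormedModule) (fun t => c1 * snd (g t))%R (fun t => c2 * fst (g t))%R).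
    + apply (is_RInt_scal (V:=R_NormedModule) (fun t => snd (g t)) a b c1 I2 H2).
    + apply (is_RInt_scal (V:=R_NormedModule) (fun t => fst (g t)) a b c2 I1 H1).
Qed.

Lemma RInt_Cmult_l (c : C) (g : R -> C) (a b : R) :
  ex_RInt (V:=CR) g a b -> RInt (V:=CR) (fun t => c * g t) a b = c * RInt (V:=CR) g a b.
Proof.
  intros H. apply is_RInt_unique. apply is_RInt_Cmult_l. now apply RInt_correct.
Qed.

Lemma ex_RInt_Cmult_l (c : C) (g : R -> C) (a b : R) :
  ex_RInt (V:=CR) g a b -> ex_RInt (V:=CR) (fun t => c * g t) a b.
Proof. intros H. eexists. apply is_RInt_Cmult_l. now apply RInt_correct. Qed.

Lemma RInt_Cplus (f g : R -> C) (a b : R) :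
  ex_RInt (V:=CR) f a b -> ex_RInt (V:=CR) g a b ->
  RInt (V:=CR) (fun t => f t + g t) a b = RInt (V:=CR) f a b + RInt (V:=CR) g a b.
Proof. intros H1 H2. exact (RInt_plus (V:=CR) f g a b H1 H2). Qed.

Lemma ex_RInt_Cplus (f g : R -> C) (a b : R) :
  ex_RInt (V:=CR) f a b -> ex_RInt (V:=CR) g a b -> ex_RInt (V:=CR) (fun t => f t + g t) a b.
Proof. intros H1 H2. exact (ex_RInt_plus (V:=CR) f g a b H1 H2). Qed.

Lemma norm_CR (z : C) : norm (K:=R_AbsRing) (V:=CR) z = Cmod z.
Proof.
  destruct z as [a b]. unfold norm; simpl. unfold prod_norm, Cmod; simpl. f_equal.
  change (norm a) with (Rabs a); change (norm b) with (Rabs b). rewrite !Rmult_1_r, <- !Rabs_mult, !Rabs_right; try apply Rle_ge; try nra. 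
Qed.

Lemma RInt_Cmod_bound (f : R -> C) (a b M : R) :
  a <= b -> ex_RInt (V:=CR) f a b -> (forall x, a <= x <= b -> Cmod (f x) <= M) ->
  Cmod (RInt (V:=CR) f a b) <= (b - a) * M.
Proof.
  intros Hab Hex Hb. rewrite <- norm_CR.
  apply (norm_RInt_le (V:=CR) f (fun _ => M) a b).
  - auto.
  - intros x Hx. rewrite norm_CR. auto.
  - now apply RInt_correct.
  - apply (is_RInt_const (V:=R_NormedModule) a b M).
Qed.

Definition Cdiffble (f : R -> C) := forall x, exists l, CD f x l.

Lemma Cdiffble_ex_RInt (f : R -> C) a b : Cdiffble f -> ex_RInt (V:=CR) f a b.
Proof.
  intros H. apply ex_RInt_continuous. intros z _. destruct (H z) as [l Hl].
  exact (CD_cont f z l Hl).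
Qed.

Lemma Cdiffble_cont (f : R -> C) x : Cdiffble f -> @continuous R_UniformSpace CR f x.
Proof. intros H. destruct (H x) as [l Hl]. exact (CD_cont f x l Hl). Qed.

Lemma periodic_zero (F f : R -> C) (a b : R) :
  (forall x, CD F x (f x)) -> Cdiffble f -> F b = F a -> RInt (V:=CR) f a b = RtoC 0.
Proof.
  intros HF Hf Hp.
  assert (E : minus (G:=CR) (F b) (F a) = RtoC 0).
  { rewrite Hp. destruct (F a); unfold minus, plus, opp; simpl. unfold prod_plus, prod_opp; simpl.
      unfold plus, opp; simpl. unfold RtoC; f_equal; ring. }
  rewrite <- E. apply is_RInt_unique.
  apply (is_RInt_derive (V:=CR) F f a b).
  - intros x _. apply CD_is_derive. auto.
  - intros x _. now apply Cdiffble_cont.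
Qed.

Lemma Cdiffble_const (c : C) : Cdiffble (fun _ => c).
Proof. intros x; eexists; apply CD_const. Qed.
Lemma Cdiffble_plus f g : Cdiffble f -> Cdiffble g -> Cdiffble (fun t => f t + g t).
Proof. intros H1 H2 x; destruct (H1 x), (H2 x); eexists; apply CD_plus; eauto. Qed.
Lemma Cdiffble_minus f g : Cdiffble f -> Cdiffble g -> Cdiffble (fun t => f t - g t).
Proof. intros H1 H2 x; destruct (H1 x), (H2 x); eexists; apply CD_minus; eauto. Qed.
Lemma Cdiffble_mult f g : Cdiffble f -> Cdiffble g -> Cdiffble (fun t => f t * g t).
Proof. intros H1 H2 x; destruct (H1 x), (H2 x); eexists; apply CD_mult; eauto. Qed.
Lemma Cdiffble_inv f : Cdiffble f -> (forall t, f t <> 0) -> Cdiffble (fun t => / f t).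
Proof. intros H1 H2 x; destruct (H1 x); eexists; apply CD_inv; eauto. Qed.
Lemma Cdiffble_cexp f : Cdiffble f -> Cdiffble (fun t => cexp (f t)).
Proof. intros H1 x; destruct (H1 x); eexists; apply CD_cexp; eauto. Qed.
Lemma Cdiffble_pow f n : Cdiffble f -> Cdiffble (fun t => f t ^ n).
Proof. intros H1 x; destruct (H1 x); eexists; apply CD_pow; eauto. Qed.

Open Scope C_scope.

Definition wc (rho th : R) : C := (rho * cos th, rho * sin th)%R.
Definition Gi (rho t : R) (L : list C) (th : R) : C :=
  Cdiv (Cmult (cexp (Cmult (RtoC t) (wc rho th))) (wc rho th))
       (Cmult (RtoC (2 * PI)) (node_poly L (wc rho th))).
Definition G (rho t : R) (L : list C) : C := RInt (V:=CR) (Gi rho t L) 0 (2 * PI).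

Lemma exp_dd_G t L : exp_dd t L = G (dd_radius L) t L.
Proof. reflexivity. Qed.

Lemma wc_CD rho th : CD (wc rho) th (Ci * wc rho th).
Proof.
  unfold wc; split; simpl.
  - eapply Rd_ext'; [apply Rd_mult; [apply Rd_const| apply Rd_cos]| intros; reflexivity| cbv beta; ring].
  - eapply Rd_ext'; [apply Rd_mult; [apply Rd_const| apply Rd_sin]| intros; reflexivity| cbv beta; ring].
Qed.

Lemma wc_diffble rho : Cdiffble (wc rho).
Proof. intros x; eexists; apply wc_CD. Qed.

Lemma wc_Cmod rho th : (0 <= rho)%R -> Cmod (wc rho th) = rho.
Proof.
  intros H. unfold Cmod, wc; simpl.
  replace (rho * cos th * (rho * cos th * 1) + rho * sin th * (rho * sin th * 1))%R
    with (rho * rho * (Rsqr (sin th) + Rsqr (cos th)))%R by (unfold Rsqr; ring).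
  rewrite sin2_cos2, Rmult_1_r. apply sqrt_square; auto.
Qed.

Lemma wc_nz rho th : (0 < rho)%R -> wc rho th <> 0.
Proof. intros H E. assert (H0 : Cmod (wc rho th) = 0%R) by (rewrite E; apply Cmod_0).
  assert (H1 : Cmod (wc rho th) = rho) by (apply wc_Cmod; lra). lra. Qed.

Lemma wc_period rho : wc rho (2 * PI) = wc rho 0.
Proof. unfold wc. rewrite cos_2PI, sin_2PI, cos_0, sin_0. reflexivity. Qed.

Definition adm (rho : R) (L : list C) : Prop := (0 < rho)%R /\ List.Forall (fun y => (Cmod y < rho)%R) L.

Definition mL (rho : R) (L : list C) : R := fold_right (fun y acc => (rho - Cmod y) * acc)%R 1%R L.

Lemma adm_cons rho y L : adm rho (y :: L) -> adm rho L.
Proof. intros [H1 H2]; inversion H2; split; auto. Qed.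

Lemma mL_pos rho L : adm rho L -> (0 < mL rho L)%R.
Proof.
  induction L as [|y L IH]; intros H; simpl. lra.
  pose proof (adm_cons _ _ _ H). destruct H as [_ H]; inversion H; subst.
  apply Rmult_lt_0_compat; [lra| auto].
Qed.

Lemma Cmod_sub_lower (w y : C) : (Cmod w - Cmod y <= Cmod (w - y))%R.
Proof.
  pose proof (Cmod_triangle (w - y) y). replace (w - y + y) with w in H by ring. lra.
Qed.

Lemma np_bound rho L th : adm rho L -> (mL rho L <= Cmod (node_poly L (wc rho th)))%R.
Proof.
  induction L as [|y L IH]; intros H; simpl.
  - rewrite Cmod_1. lra.
  - pose proof (adm_cons _ _ _ H) as H'. specialize (IH H'). pose proof (mL_pos _ _ H').
    destruct H as [Hr H]; inversion H; subst.
    rewrite Cmod_mult. apply Rmult_le_compat; try lra.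
    pose proof (Cmod_sub_lower (wc rho th) y) as Hs.
    assert (Hw : Cmod (wc rho th) = rho) by (apply wc_Cmod; lra). 
    assert (Cmod y < rho)%R by auto. lra.
Qed.

Lemma np_nz rho L th : adm rho L -> node_poly L (wc rho th) <> 0.
Proof.
  intros H E. pose proof (np_bound rho L th H). pose proof (mL_pos _ _ H).
  rewrite E, Cmod_0 in H0. lra.
Qed.

Lemma np_diffble rho L : Cdiffble (fun th => node_poly L (wc rho th)).
Proof.
  induction L as [|y L IH]; simpl.
  - apply Cdiffble_const.
  - apply Cdiffble_mult; auto. apply Cdiffble_minus; [apply wc_diffble| apply Cdiffble_const].
Qed.

Lemma two_PI_nz : RtoC (2 * PI) <> 0.
Proof. intros E. injection E; intros. pose proof PI_RGT_0. lra. Qed.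

Lemma Cmult_neq0 (a b : C) : a <> 0 -> b <> 0 -> a * b <> 0.
Proof. intros Ha Hb E. apply Hb. replace b with (/ a * (a * b)) by (field; auto). rewrite E; ring. Qed.

Lemma Gi_diffble rho t L : adm rho L -> Cdiffble (Gi rho t L).
Proof.
  intros H. unfold Gi, Cdiv. apply Cdiffble_mult.
  - apply Cdiffble_mult; [apply Cdiffble_cexp, Cdiffble_mult; [apply Cdiffble_const| apply wc_diffble]| apply wc_diffble].
  - apply Cdiffble_inv. apply Cdiffble_mult; [apply Cdiffble_const| apply np_diffble].
    intros th. apply Cmult_neq0; [apply two_PI_nz| apply (np_nz rho L th H)].
Qed.

Lemma Cmod_cexp z : Cmod (cexp z) = exp (fst z).
Proof.
  destruct z as [a b]. unfold Cmod, cexp, Re, Im; simpl.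
  replace (exp a * cos b * (exp a * cos b * 1) + exp a * sin b * (exp a * sin b * 1))%R
    with (exp a * exp a * (Rsqr (sin b) + Rsqr (cos b)))%R by (unfold Rsqr; ring).
  rewrite sin2_cos2, Rmult_1_r. apply sqrt_square. left; apply exp_pos.
Qed.

Open Scope C_scope.

Definition Ui (rho : R) (n : nat) (L : list C) (th : R) : C := / (wc rho th ^ n * node_poly L (wc rho th)).
Definition U (rho : R) (n : nat) (L : list C) : C := RInt (V:=CR) (Ui rho n L) 0 (2 * PI).

Lemma wc_pow_nz rho th n : (0 < rho)%R -> wc rho th ^ n <> 0.
Proof. intros H. apply Cpow_nz. now apply wc_nz. Qed.

Lemma Ui_diffble rho n L : adm rho L -> Cdiffble (Ui rho n L).
Proof.
  intros H. unfold Ui. apply Cdiffble_inv.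
  - apply Cdiffble_mult; [apply Cdiffble_pow, wc_diffble| apply np_diffble].
  - intros th. apply Cmult_neq0; [apply wc_pow_nz; apply H| apply np_nz; auto].
Qed.

Lemma two_PI_pos : (0 < 2 * PI)%R.
Proof. pose proof PI_RGT_0; lra. Qed.

Lemma U_bound rho n L : adm rho L -> (Cmod (U rho n L) <= 2 * PI * / (rho ^ n * mL rho L))%R.
Proof.
  intros H. unfold U. replace (2 * PI)%R with (2 * PI - 0)%R at 2 by ring.
  apply RInt_Cmod_bound.
  - pose proof two_PI_pos; lra.
  - apply Cdiffble_ex_RInt, Ui_diffble; auto.
  - intros th _. unfold Ui. pose proof (mL_pos _ _ H) as Hm. destruct H as [Hr H'].
    rewrite Cmod_inv by (apply Cmult_neq0; [apply wc_pow_nz; auto| apply np_nz; split; auto]).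
    rewrite Cmod_mult, Cmod_pow, wc_Cmod by lra.
    apply Rinv_le_contravar. apply Rmult_lt_0_compat; auto. apply pow_lt; auto.
    apply Rmult_le_compat_l. left; apply pow_lt; auto. apply np_bound. split; auto.
Qed.

Lemma U_nil0 rho : U rho 0 [] = RtoC (2 * PI).
Proof.
  unfold U. refine (is_RInt_unique (V:=CR) _ _ _ _ _).
  apply (is_RInt_ext (V:=CR) (fun _ => RtoC 1)).
  - intros x _. unfold Ui; simpl. field.
  - replace (RtoC (2 * PI)) with (scal (V:=CR) (2 * PI - 0)%R (RtoC 1)).
    exact (is_RInt_const (V:=CR) 0 (2*PI) (RtoC 1)). unfold scal; simpl. unfold prod_scal; simpl. unfold scal; simpl; unfold mult; simpl.
    unfold RtoC; f_equal; ring.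
Qed.

Lemma RtoC_INR_nz n : n <> 0%nat -> RtoC (INR n) <> 0.
Proof. intros H E. injection E; intros. apply (not_0_INR n H). auto. Qed.

Lemma Ci_nz : Ci <> 0.
Proof. intros E. injection E; intros. lra. Qed.

Lemma RInt_Cmult_zero (c : C) (g : R -> C) (a b : R) : c <> 0 -> ex_RInt (V:=CR) g a b ->
  RInt (V:=CR) (fun t => c * g t) a b = RtoC 0 -> RInt (V:=CR) g a b = RtoC 0.
Proof.
  intros Hc Hex E. rewrite RInt_Cmult_l in E by auto.
  revert E. generalize (RInt (V:=CR) g a b). intros I E.
  change (@eq C I (RtoC 0)). change (@eq C (c * I) (RtoC 0)) in E.
  replace I with (/ c * (c * I)) by (field; auto).
  rewrite E. ring.
Qed.

Lemma U_nilS rho n : (0 < rho)%R -> n <> 0%nat -> U rho n [] = RtoC 0.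
Proof.
  intros Hr Hn. unfold U.
  apply (RInt_Cmult_zero (- RtoC (INR n) * Ci)).
  - intros E. apply (Cmult_neq0 (- RtoC (INR n)) Ci); auto.
    intros E'. apply (RtoC_INR_nz n Hn). replace (RtoC (INR n)) with (- - RtoC (INR n)) by ring. rewrite E'; ring.
    apply Ci_nz.
  - apply Cdiffble_ex_RInt, Ui_diffble. split; auto.
  - apply (periodic_zero (fun th => / wc rho th ^ n)).
    + intros th. eapply (CD_ext' (fun th => / wc rho th ^ n)).
      * apply (CD_inv (fun th => wc rho th ^ n)). apply wc_pow_nz; auto. apply (CD_pow (wc rho)). apply wc_CD.
      * intros; reflexivity.
      * unfold Ui; simpl. destruct n as [|k]; [lia|]. replace (S k - 1)%nat with k by lia.
        rewrite Cpow_S. pose proof (wc_nz rho th Hr). pose proof (wc_pow_nz rho th k Hr).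
        remember (wc rho th ^ k) as y. remember (wc rho th) as w. 
        field. repeat split; auto.
    + intros x. destruct (Ui_diffble rho n [] (conj Hr (List.Forall_nil _)) x) as [l Hl].
      eexists. apply CD_mult; [apply CD_const| exact Hl].
    + now rewrite wc_period.
Qed.

Lemma wc_minus_nz rho th y : (0 < rho)%R -> (Cmod y < rho)%R -> wc rho th - y <> 0.
Proof.
  intros Hr Hy E. pose proof (Cmod_sub_lower (wc rho th) y). rewrite E, Cmod_0 in H.
  rewrite wc_Cmod in H by lra. lra.
Qed.

Lemma U_step rho n y L : adm rho (y :: L) ->
  U rho n (y :: L) = U rho (S n) L + y * U rho (S n) (y :: L).
Proof.
  intros H. pose proof (adm_cons _ _ _ H) as H'. unfold U.
  rewrite <- RInt_Cmult_l by (apply Cdiffble_ex_RInt, Ui_diffble; auto).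
  rewrite <- RInt_Cplus.
  2: apply Cdiffble_ex_RInt, Ui_diffble; auto.
  2: apply ex_RInt_Cmult_l, Cdiffble_ex_RInt, Ui_diffble; auto.
  apply (RInt_ext (V:=CR)). intros th _. unfold Ui; simpl.
  destruct H as [Hr Hl]. inversion Hl; subst.
  pose proof (wc_nz rho th Hr). pose proof (wc_pow_nz rho th n Hr).
  pose proof (wc_minus_nz rho th y Hr H1). pose proof (np_nz rho L th H').
  remember (wc rho th ^ n) as a. remember (wc rho th) as w. remember (node_poly L w) as p.
  field. repeat split; auto.
Qed.

Lemma lim_zero (a q K : R) : (0 <= q < 1)%R -> (forall N, a <= q ^ N * K)%R -> (0 <= a)%R -> a = 0%R.
Proof.
  intros Hq HN Ha. destruct (Req_dec a 0) as [|Hne]; auto. exfalso.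
  assert (Hapos : (0 < a)%R) by lra.
  assert (HK : (0 < K)%R).
  { specialize (HN 0%nat). simpl in HN. lra. }
  destruct (pow_lt_1_zero q ltac:(rewrite Rabs_right; lra) (a / K)%R ltac:(apply Rdiv_lt_0_compat; lra)) as [N HNN].
  specialize (HNN N (Nat.le_refl _)). specialize (HN N).
  rewrite Rabs_right in HNN by (apply Rle_ge, pow_le; lra).
  assert (q ^ N * K < a / K * K)%R by (apply Rmult_lt_compat_r; lra).
  replace (a / K * K)%R with a in H by (field; lra). lra.
Qed.

Lemma U_vanish rho L : adm rho L -> forall n, (L <> [] \/ n <> 0%nat) -> U rho n L = RtoC 0.
Proof.
  induction L as [|y L IH]; intros H n Hn.
  - destruct Hn as [Hn|Hn]; [congruence|]. apply U_nilS; auto. apply H.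
  - pose proof (adm_cons _ _ _ H) as H'.
    assert (Hs : forall k, U rho k (y :: L) = y * U rho (S k) (y :: L)).
    { intros k. rewrite U_step by auto. destruct L as [|z L'].
      - rewrite U_nilS by (try apply H; lia). ring.
      - rewrite IH by (auto; left; congruence). ring. }
    assert (HN : forall N k, U rho k (y :: L) = y ^ N * U rho (k + N) (y :: L)).
    { induction N; intros k. simpl. rewrite Nat.add_0_r; ring.
      rewrite Hs, IHN. replace (S k + N)%nat with (k + S N)%nat by lia. simpl. ring. }
    apply Cmod_eq_0. destruct H as [Hr Hl]. inversion Hl; subst; cbv beta in *.
    apply (lim_zero _ (Cmod y / rho) (2 * PI * / (rho ^ n * mL rho (y :: L)))).
    + split. apply Rdiv_le_0_compat; [apply Cmod_ge_0| lra]. unfold Rdiv; rewrite <- (Rinv_r rho) by lra; apply Rmult_lt_compat_r; [apply Rinv_0_lt_compat|]; lra.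
    + intros N. rewrite HN with (N := N). rewrite Cmod_mult, Cmod_pow.
      pose proof (U_bound rho (n + N) (y :: L) (conj Hr Hl)) as Hb.
      pose proof (mL_pos _ _ (conj Hr Hl)) as Hm.
      eapply Rle_trans. apply Rmult_le_compat_l. apply pow_le, Cmod_ge_0. exact Hb.
      rewrite pow_add. unfold Rdiv. rewrite Rpow_mult_distr, pow_inv.
      right. field. split; [lra| split; [apply pow_nonzero; lra| apply pow_nonzero; lra]].
    + apply Cmod_ge_0.
Qed.

Open Scope C_scope.

Lemma cexp_0w (w : C) : cexp (RtoC 0 * w) = 1.
Proof. replace (RtoC 0 * w) with (RtoC 0) by ring. apply cexp_0. Qed.

Lemma G_nil rho t : (0 < rho)%R -> G rho t [] = RtoC 0.
Proof.
  intros Hr. assert (Ha : adm rho []) by (split; auto).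
  unfold G. destruct (Req_dec t 0) as [Ht|Ht].
  - subst t. apply (RInt_Cmult_zero (Ci * RtoC (2 * PI))).
    + apply Cmult_neq0; [apply Ci_nz| apply two_PI_nz].
    + apply Cdiffble_ex_RInt, Gi_diffble; auto.
    + apply (periodic_zero (wc rho)).
      * intros th. eapply CD_ext'; [apply wc_CD| intros; reflexivity|].
        unfold Gi, Cdiv; simpl. rewrite cexp_0w. pose proof two_PI_nz. field; auto.
      * apply Cdiffble_mult; [apply Cdiffble_const| apply Gi_diffble; auto].
      * apply wc_period.
  - apply (RInt_Cmult_zero (RtoC t * Ci * RtoC (2 * PI))).
    + apply Cmult_neq0; [apply Cmult_neq0|apply two_PI_nz]. intros E; injection E; intros; lra. apply Ci_nz.
    + apply Cdiffble_ex_RInt, Gi_diffble; auto.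
    + apply (periodic_zero (fun th => cexp (RtoC t * wc rho th))).
      * intros th. eapply CD_ext'; [apply CD_cexp; apply CD_mult; [apply CD_const| apply wc_CD]| intros; reflexivity|].
        unfold Gi, Cdiv; simpl. pose proof two_PI_nz. field; auto.
      * apply Cdiffble_mult; [apply Cdiffble_const| apply Gi_diffble; auto].
      * now rewrite wc_period.
Qed.

Lemma G0_cons rho y L : adm rho (y :: L) ->
  G rho 0 (y :: L) = / RtoC (2 * PI) * (U rho 0 L + y * U rho 0 (y :: L)).
Proof.
  intros H. pose proof (adm_cons _ _ _ H) as H'. unfold G, U.
  rewrite <- RInt_Cmult_l by (apply Cdiffble_ex_RInt, Ui_diffble; auto).
  rewrite <- RInt_Cplus.
  2: apply Cdiffble_ex_RInt, Ui_diffble; auto.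
  2: apply ex_RInt_Cmult_l, Cdiffble_ex_RInt, Ui_diffble; auto.
  rewrite <- RInt_Cmult_l.
  2: apply ex_RInt_Cplus; [apply Cdiffble_ex_RInt, Ui_diffble; auto| apply ex_RInt_Cmult_l, Cdiffble_ex_RInt, Ui_diffble; auto].
  apply (RInt_ext (V:=CR)). intros th _. unfold Gi, Ui, Cdiv; simpl. rewrite cexp_0w.
  destruct H as [Hr Hl]. inversion Hl; subst; cbv beta in *.
  pose proof (wc_minus_nz rho th y Hr H1). pose proof (np_nz rho L th H').
  pose proof two_PI_nz.
  remember (wc rho th) as w. remember (node_poly L w) as p.
  field. repeat split; auto.
Qed.

Lemma G_zero rho L : adm rho L -> G rho 0 L = if (length L =? 1)%nat then RtoC 1 else RtoC 0.
Proof.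
  intros H. destruct L as [|y L].
  - simpl. apply G_nil. apply H.
  - rewrite G0_cons by auto. rewrite (U_vanish rho (y :: L)) by (auto; left; congruence).
    destruct L as [|z L].
    + simpl. rewrite U_nil0. field. apply two_PI_nz.
    + rewrite U_vanish by (try (apply (adm_cons _ _ _ H)); left; congruence). simpl. ring.
Qed.

Open Scope C_scope.

Lemma is_RInt_ext_C (f g : R -> C) (a b : R) (l : C) : (forall x, f x = g x) ->
  is_RInt (V:=CR) f a b l -> is_RInt (V:=CR) g a b l.
Proof. intros H1 H2. apply (is_RInt_ext (V:=CR) f); auto. Qed.

Lemma im_le_Cmod (c : C) : (Rabs (snd c) <= Cmod c)%R.
Proof.
  destruct c as [a b]. pose proof (re_le_Cmod (b, a)). simpl in H.
  replace (Cmod (a, b)) with (Cmod (b, a)); auto. unfold Cmod; simpl. f_equal; ring.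
Qed.

Lemma Cmod_cexp_le (z : C) : (Cmod (cexp z) <= exp (Cmod z))%R.
Proof.
  rewrite Cmod_cexp. pose proof (re_le_Cmod z). unfold Re in H.
  destruct (Rle_lt_dec (fst z) (Cmod z)).
  - destruct r. left; apply exp_increasing; auto. rewrite H0; right; auto.
  - pose proof (Rle_abs (fst z)). lra.
Qed.

Lemma Rd_from_bound (f : R -> R) (t l K : R) : (0 <= K)%R ->
  (forall h, Rabs h <= 1 -> Rabs (f (t + h) - f t - h * l) <= K * (h * h))%R -> is_derive f t l.
Proof.
  intros HK Hb. apply is_derive_Reals. intros eps Heps.
  exists (mkposreal (Rmin 1 (eps / (K + 1))) ltac:(apply Rmin_pos; [lra| apply Rdiv_lt_0_compat; lra])).
  intros h Hh0 Hh. simpl in Hh.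
  assert (Hh1 : (Rabs h <= 1)%R) by (pose proof (Rmin_l 1 (eps / (K + 1))); lra).
  assert (Hh2 : (Rabs h < eps / (K + 1))%R) by (pose proof (Rmin_r 1 (eps / (K + 1))); lra).
  specialize (Hb h Hh1).
  replace ((f (t + h) - f t) / h - l)%R with ((f (t + h) - f t - h * l) / h)%R by (field; auto).
  unfold Rdiv. rewrite Rabs_mult, Rabs_inv.
  assert (Hp : (0 < Rabs h)%R) by (apply Rabs_pos_lt; auto).
  apply (Rmult_lt_reg_r (Rabs h)); auto. rewrite Rmult_assoc, Rinv_l by lra. rewrite Rmult_1_r.
  eapply Rle_lt_trans. exact Hb.
  replace (h * h)%R with (Rabs h * Rabs h)%R by (rewrite <- Rabs_mult; apply Rabs_right; nra).
  assert (K * Rabs h <= (K + 1) * Rabs h)%R by nra.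
  assert ((K + 1) * Rabs h < eps)%R.
  { apply (Rmult_lt_compat_l (K + 1)) in Hh2; [|lra]. replace ((K + 1) * (eps / (K + 1)))%R with eps in Hh2 by (field; lra). lra. }
  nra.
Qed.

Lemma CD_from_bound (F : R -> C) (t : R) (l : C) (K : R) : (0 <= K)%R ->
  (forall h, Rabs h <= 1 -> Cmod (F (t + h)%R - F t - RtoC h * l) <= K * (h * h))%R -> CD F t l.
Proof.
  intros HK Hb. split.
  - apply (Rd_from_bound _ t (fst l) K HK). intros h Hh.
    eapply Rle_trans; [| apply (Hb h Hh)].
    eapply Rle_trans; [| apply re_le_Cmod]. unfold Re; simpl. right; f_equal; ring.
  - apply (Rd_from_bound _ t (snd l) K HK). intros h Hh.
    eapply Rle_trans; [| apply (Hb h Hh)].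
    eapply Rle_trans; [| apply im_le_Cmod]. simpl. right; f_equal; ring.
Qed.

Lemma cexp_taylor (z : C) : (Cmod (cexp z - 1 - z) <= Cmod z ^ 2 * exp (Cmod z))%R.
Proof.
  set (phi := fun s : R => cexp (RtoC s * z)).
  set (H := fun s : R => RtoC (1 - s) * z * phi s + phi s).
  set (dH := fun s : R => RtoC (1 - s) * (z * z) * phi s).
  assert (HD : forall s, CD H s (dH s)).
  { intros s.
    assert (h1 : is_derive (fun s => 1 - s)%R s (-1)%R).
    { eapply Rd_ext'; [apply Rd_minus; [apply Rd_const| apply Rd_id]| intros; reflexivity| cbv beta; ring]. }
    assert (c1 : CD (fun s => RtoC (1 - s)) s (RtoC (-1))) by (apply (CD_RtoC (fun s => 1 - s)%R); auto).
    assert (c2 : CD phi s (z * phi s)).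
    { unfold phi. eapply CD_ext'; [apply CD_cexp; apply CD_mult; [apply CD_id| apply CD_const]| intros; reflexivity| cbv beta; ring]. }
    eapply CD_ext'; [apply CD_plus; [apply CD_mult; [apply CD_mult; [apply c1| apply (CD_const z)]| apply c2]| apply c2]| intros; reflexivity|].
    unfold dH. unfold RtoC; simpl. remember (phi s) as p. destruct z as [a b]; destruct p as [c d]. unfold Cmult, Cplus; simpl. f_equal; ring. }
  assert (HdHd : Cdiffble dH).
  { unfold dH, phi. apply Cdiffble_mult; [apply Cdiffble_mult; [|apply Cdiffble_const]|].
    - intros x; eexists. apply (CD_RtoC (fun s => 1 - s)%R). eapply Rd_ext'; [apply Rd_minus; [apply Rd_const| apply Rd_id]| intros; reflexivity| reflexivity].
    - apply Cdiffble_cexp. apply Cdiffble_mult; [intros x; eexists; apply CD_id| apply Cdiffble_const]. }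
  assert (HI : is_RInt (V:=CR) dH 0 1 (minus (G:=CR) (H 1%R) (H 0%R))).
  { apply (is_RInt_derive (V:=CR) H dH 0 1).
    - intros x _. apply CD_is_derive. auto.
    - intros x _. now apply Cdiffble_cont. }
  assert (E : minus (G:=CR) (H 1%R) (H 0%R) = cexp z - 1 - z).
  { assert (E1 : H 1%R = cexp z).
    { unfold H, phi. replace (RtoC 1 * z) with z by ring. replace (RtoC (1 - 1)) with (RtoC 0) by (f_equal; ring). ring. }
    assert (E0 : H 0%R = z + 1).
    { unfold H, phi. replace (RtoC 0 * z) with (RtoC 0) by ring. rewrite cexp_0. replace (RtoC (1-0)) with (RtoC 1) by (f_equal; ring). ring. }
    rewrite E1, E0. generalize (cexp z). intros c. destruct c as [c d]; destruct z as [a b].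
    unfold minus, plus, opp; simpl. unfold prod_plus, prod_opp, plus, opp; simpl.
    unfold Cminus, Cplus, Copp, RtoC; simpl. f_equal; ring. }
  rewrite E in HI. apply is_RInt_unique in HI. rewrite <- HI.
  replace (Cmod z ^ 2 * exp (Cmod z))%R with ((1 - 0) * (Cmod z ^ 2 * exp (Cmod z)))%R by ring.
  apply RInt_Cmod_bound; [lra| apply Cdiffble_ex_RInt; auto |].
  - intros s Hs. unfold dH, phi. rewrite !Cmod_mult. rewrite Cmod_R.
    rewrite Rabs_right by lra.
    assert (Cmod (cexp (RtoC s * z)) <= exp (Cmod z))%R.
    { eapply Rle_trans; [apply Cmod_cexp_le|]. rewrite Cmod_mult, Cmod_R, Rabs_right by lra.
      destruct (Rle_lt_dec (s * Cmod z) (Cmod z)) as [[Hl|Hl]|Hl]. left; apply exp_increasing; auto.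
      rewrite Hl; right; auto. pose proof (Cmod_ge_0 z); nra. }
    pose proof (Cmod_ge_0 z). pose proof (Cmod_ge_0 (cexp (RtoC s * z))).
    simpl. assert (0 <= Cmod z * Cmod z)%R by nra.
    replace (Cmod z * (Cmod z * 1))%R with (Cmod z * Cmod z)%R by ring.
    assert ((1 - s) * (Cmod z * Cmod z) <= Cmod z * Cmod z)%R by nra.
    apply Rmult_le_compat; try nra.
Qed.

Definition G1 (rho t : R) (L : list C) : C := RInt (V:=CR) (fun th => wc rho th * Gi rho t L th) 0 (2 * PI).

Lemma Gi_shift rho t h L th : Gi rho (t + h) L th = cexp (RtoC h * wc rho th) * Gi rho t L th.
Proof.
  unfold Gi, Cdiv.
  replace (RtoC (t + h) * wc rho th) with (RtoC t * wc rho th + RtoC h * wc rho th).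
  2:{ replace (RtoC (t + h)) with (RtoC t + RtoC h) by (unfold RtoC, Cplus; simpl; f_equal; ring). ring. }
  rewrite <- cexp_add. ring.
Qed.

Lemma Gi_bound rho t L th : adm rho L ->
  (Cmod (Gi rho t L th) <= exp (Rabs t * rho) * rho / (2 * PI * mL rho L))%R.
Proof.
  intros H. pose proof (mL_pos _ _ H) as Hm. pose proof (np_bound rho L th H) as Hb.
  pose proof two_PI_pos as Hp. destruct H as [Hr Hl].
  unfold Gi. rewrite Cmod_div.
  2:{ apply Cmult_neq0; [apply two_PI_nz| apply np_nz; split; auto]. }
  rewrite !Cmod_mult, Cmod_R, wc_Cmod by lra. rewrite Rabs_right by lra.
  unfold Rdiv. apply Rmult_le_compat.
  - apply Rmult_le_pos; [apply Cmod_ge_0| lra].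
  - left; apply Rinv_0_lt_compat. apply Rmult_lt_0_compat; lra.
  - apply Rmult_le_compat_r; [lra|]. eapply Rle_trans; [apply Cmod_cexp_le|].
    rewrite Cmod_mult, Cmod_R, wc_Cmod by lra. right; reflexivity.
  - apply Rinv_le_contravar. apply Rmult_lt_0_compat; lra. apply Rmult_le_compat_l; lra.
Qed.

Lemma G_deriv rho t L : adm rho L -> CD (fun t => G rho t L) t (G1 rho t L).
Proof.
  intros H. pose proof (mL_pos _ _ H) as Hm. pose proof two_PI_pos as Hp.
  assert (Hr : (0 < rho)%R) by apply H.
  set (B := (exp (Rabs t * rho) * rho / (2 * PI * mL rho L))%R).
  assert (HB : (0 <= B)%R).
  { unfold B. apply Rmult_le_pos. apply Rmult_le_pos; [left; apply exp_pos| lra].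
    left; apply Rinv_0_lt_compat; apply Rmult_lt_0_compat; lra. }
  apply (CD_from_bound _ t _ ((2 * PI - 0) * (rho ^ 2 * exp rho * B))).
  { apply Rmult_le_pos; [lra|]. apply Rmult_le_pos; auto. apply Rmult_le_pos; [apply pow_le; lra| left; apply exp_pos]. }
  intros h Hh.
  set (E := fun th => (cexp (RtoC h * wc rho th) - 1 - RtoC h * wc rho th) * Gi rho t L th).
  assert (HGi : Cdiffble (Gi rho t L)) by (apply Gi_diffble; auto).
  assert (HE : Cdiffble E).
  { unfold E. apply Cdiffble_mult; auto. apply Cdiffble_minus; [apply Cdiffble_minus|].
    apply Cdiffble_cexp, Cdiffble_mult; [apply Cdiffble_const| apply wc_diffble]. apply Cdiffble_const.
    apply Cdiffble_mult; [apply Cdiffble_const| apply wc_diffble]. }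
  assert (HwG : Cdiffble (fun th => wc rho th * Gi rho t L th)) by (apply Cdiffble_mult; auto; apply wc_diffble).
  assert (e : G rho (t + h) L = G rho t L + (RInt (V:=CR) E 0 (2 * PI) + RtoC h * G1 rho t L)).
  { unfold G at 1. refine (is_RInt_unique (V:=CR) _ _ _ _ _).
    apply (is_RInt_ext_C (fun th => Gi rho t L th + (E th + RtoC h * (wc rho th * Gi rho t L th)))).
    - intros th. rewrite Gi_shift. unfold E. ring.
    - apply (is_RInt_plus (V:=CR)). apply (RInt_correct (V:=CR)), Cdiffble_ex_RInt; auto.
      apply (is_RInt_plus (V:=CR)). apply (RInt_correct (V:=CR)), Cdiffble_ex_RInt; auto.
      apply is_RInt_Cmult_l. apply (RInt_correct (V:=CR)), Cdiffble_ex_RInt; auto. }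
  assert (e2 : G rho (t+h) L - G rho t L - RtoC h * G1 rho t L = RInt (V:=CR) E 0 (2*PI)).
  { rewrite e. generalize (RInt (V:=CR) E 0 (2 * PI)). intros I. change C in I. ring. }
  rewrite e2.
  replace ((2 * PI - 0) * (rho ^ 2 * exp rho * B) * (h * h))%R
    with ((2 * PI - 0) * ((h * h) * rho ^ 2 * exp rho * B))%R by ring.
  apply RInt_Cmod_bound; [lra| apply Cdiffble_ex_RInt; auto|].
  intros th _. unfold E. rewrite Cmod_mult.
  assert (Hw : Cmod (RtoC h * wc rho th) = (Rabs h * rho)%R) by (rewrite Cmod_mult, Cmod_R, wc_Cmod; lra).
  pose proof (cexp_taylor (RtoC h * wc rho th)) as Ht. rewrite Hw in Ht.
  pose proof (Gi_bound rho t L th H) as Hg. fold B in Hg.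
  apply Rmult_le_compat; try apply Cmod_ge_0; auto.
  eapply Rle_trans; [exact Ht|].
  replace ((Rabs h * rho) ^ 2)%R with (h * h * rho ^ 2)%R.
  2:{ rewrite Rpow_mult_distr, pow2_abs. ring. }
  apply Rmult_le_compat_l. apply Rmult_le_pos; [nra| apply pow_le; lra].
  destruct (Rle_lt_dec (Rabs h * rho) rho) as [[Hl|Hl]|Hl].
  - left; apply exp_increasing; auto.
  - rewrite Hl; right; auto.
  - exfalso. pose proof (Rabs_pos h). nra.
Qed.

Lemma G1_cons rho t y L : adm rho (y :: L) -> G1 rho t (y :: L) = y * G rho t (y :: L) + G rho t L.
Proof.
  intros H. pose proof (adm_cons _ _ _ H) as H'. unfold G1, G.
  rewrite <- RInt_Cmult_l by (apply Cdiffble_ex_RInt, Gi_diffble; auto).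
  rewrite <- RInt_Cplus.
  2: apply ex_RInt_Cmult_l, Cdiffble_ex_RInt, Gi_diffble; auto.
  2: apply Cdiffble_ex_RInt, Gi_diffble; auto.
  apply (RInt_ext (V:=CR)). intros th _. unfold Gi, Cdiv; simpl.
  destruct H as [Hr Hl]. inversion Hl; subst; cbv beta in *.
  pose proof (wc_minus_nz rho th y Hr H1). pose proof (np_nz rho L th H').
  pose proof two_PI_nz.
  remember (wc rho th) as w. remember (node_poly L w) as p.
  field. repeat split; auto.
Qed.

Lemma G_ode rho t y L : adm rho (y :: L) ->
  CD (fun t => G rho t (y :: L)) t (y * G rho t (y :: L) + G rho t L).
Proof. intros H. rewrite <- G1_cons by auto. apply G_deriv; auto. Qed.

Open Scope C_scope.

Lemma G_indep L : forall rho rho', adm rho L -> adm rho' L -> forall t, G rho t L = G rho' t L.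
Proof.
  induction L as [|y L IH]; intros rho rho' H H' t.
  - rewrite !G_nil; auto. apply H'. apply H.
  - set (f := fun t => G rho t (y :: L) - G rho' t (y :: L)).
    assert (Hf : forall s, CD f s (y * f s)).
    { intros s. eapply (CD_ext' (fun t => G rho t (y :: L) - G rho' t (y :: L)));
        [apply CD_minus; [apply (G_ode rho); auto| apply (G_ode rho'); auto]| intros; reflexivity|].
      unfold f. rewrite (IH rho rho' (adm_cons _ _ _ H) (adm_cons _ _ _ H') s). ring. }
    assert (H0 : f 0%R = 0).
    { unfold f. rewrite !G_zero by auto. ring. }
    pose proof (ode_unique f y Hf H0 t) as E. unfold f in E.
    replace (G rho t (y :: L)) with (G rho t (y :: L) - G rho' t (y :: L) + G rho' t (y :: L)) by ring.
    rewrite E. ring.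
Qed.

Lemma sumL_nonneg L : (0 <= fold_right (fun y acc => Cmod y + acc) 0 L)%R.
Proof. induction L; simpl. lra. pose proof (Cmod_ge_0 a). lra. Qed.

Lemma adm_le L : forall r, (1 + fold_right (fun y acc => Cmod y + acc) 0 L <= r)%R ->
  List.Forall (fun y => (Cmod y < r)%R) L.
Proof.
  induction L as [|y L IH]; intros r Hr; simpl in *; constructor.
  - pose proof (sumL_nonneg L). lra.
  - apply IH. pose proof (Cmod_ge_0 y). lra.
Qed.

Lemma adm_dd L : adm (dd_radius L) L.
Proof.
  split. unfold dd_radius. pose proof (sumL_nonneg L). lra.
  apply adm_le. unfold dd_radius. lra.
Qed.

Lemma D_nil t : exp_dd t [] = RtoC 0.
Proof. rewrite exp_dd_G. apply G_nil. apply (adm_dd []). Qed.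

Lemma D_zero L : exp_dd 0 L = if (length L =? 1)%nat then RtoC 1 else RtoC 0.
Proof. rewrite exp_dd_G. apply G_zero, adm_dd. Qed.

Lemma D_ode y L t : CD (fun t => exp_dd t (y :: L)) t (y * exp_dd t (y :: L) + exp_dd t L).
Proof.
  eapply CD_ext'; [apply (G_ode (dd_radius (y :: L)) t y L (adm_dd _))| intros; reflexivity|].
  rewrite (exp_dd_G t L), (G_indep L (dd_radius (y :: L)) (dd_radius L)); auto.
  apply (adm_cons _ _ _ (adm_dd _)). apply adm_dd.
Qed.

Lemma np_perm L L' z : Permutation L L' -> node_poly L z = node_poly L' z.
Proof.
  intros P. induction P; simpl; auto.
  - rewrite IHP; auto.
  - ring.
  - congruence.
Qed.

Lemma D_perm t L L' : Permutation L L' -> exp_dd t L = exp_dd t L'.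
Proof.
  intros P. rewrite !exp_dd_G.
  rewrite (G_indep L' (dd_radius L') (dd_radius L)).
  - unfold G. apply (RInt_ext (V:=CR)). intros th _. unfold Gi. rewrite (np_perm L L'); auto.
  - apply adm_dd.
  - split. apply (adm_dd L). destruct (adm_dd L) as [_ HF].
    eapply Permutation_Forall; eauto.
Qed.

Open Scope C_scope.

Definition CS (f : nat -> C) (n m : nat) : C := sum_n_m (G:=C_AbelianMonoid) f n m.

Lemma cs_plus (f g : nat -> C) n m : CS (fun k => f k + g k) n m = CS f n m + CS g n m.
Proof. unfold CS; exact (sum_n_m_plus (G:=C_AbelianMonoid) f g n m). Qed.
Lemma cs_mult_l (c : C) (f : nat -> C) n m : CS (fun k => c * f k) n m = c * CS f n m.
Proof. unfold CS; exact (sum_n_m_mult_l (K:=C_Ring) c f n m). Qed.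
Lemma cs_mult_r (c : C) (f : nat -> C) n m : CS (fun k => f k * c) n m = CS f n m * c.
Proof. unfold CS; exact (sum_n_m_mult_r (K:=C_Ring) c f n m). Qed.
Lemma cs_Sn (f : nat -> C) n m : (n <= m)%nat -> CS f n m = f n + CS f (S n) m.
Proof. intros H. unfold CS; exact (sum_Sn_m (G:=C_AbelianMonoid) f n m H). Qed.
Lemma cs_nSm (f : nat -> C) n m : (n <= S m)%nat -> CS f n (S m) = CS f n m + f (S m).
Proof. intros H. unfold CS; exact (sum_n_Sm (G:=C_AbelianMonoid) f n m H). Qed.
Lemma cs_empty (f : nat -> C) n m : (m < n)%nat -> CS f n m = RtoC 0.
Proof. intros H. unfold CS; exact (sum_n_m_zero (G:=C_AbelianMonoid) f n m H). Qed.
Lemma cs_ext (f g : nat -> C) n m : (forall k, (n <= k <= m)%nat -> f k = g k) -> CS f n m = CS g n m.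
Proof. intros H. unfold CS; exact (sum_n_m_ext_loc (G:=C_AbelianMonoid) f g n m H). Qed.
Lemma cs_zero (f : nat -> C) n m : (forall k, (n <= k <= m)%nat -> f k = RtoC 0) -> CS f n m = RtoC 0.
Proof.
  intros H. rewrite (cs_ext f (fun _ => RtoC 0)) by auto.
  unfold CS; exact (sum_n_m_const_zero (G:=C_AbelianMonoid) n m).
Qed.
Lemma cs_one (f : nat -> C) n : CS f n n = f n.
Proof. unfold CS; exact (sum_n_n (G:=C_AbelianMonoid) f n). Qed.
Lemma cs_minus (f g : nat -> C) n m : CS (fun k => f k - g k) n m = CS f n m - CS g n m.
Proof.
  rewrite (cs_ext (fun k => f k - g k) (fun k => f k + RtoC (-1) * g k)) by (intros; ring).
  rewrite cs_plus, cs_mult_l. ring.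
Qed.

Lemma cs_triangle (f : nat -> nat -> C) j :
  CS (fun r => CS (fun k => f r k) r j) 0 j = CS (fun k => CS (fun r => f r k) 0 k) 0 j.
Proof.
  induction j as [|j IH].
  - rewrite !cs_one. reflexivity.
  - rewrite (cs_nSm _ 0 j) by lia. rewrite (cs_nSm (fun k => CS (fun r => f r k) 0 k) 0 j) by lia.
    rewrite <- IH. rewrite cs_one.
    rewrite (cs_ext (fun r => CS (fun k => f r k) r (S j)) (fun r => CS (fun k => f r k) r j + f r (S j))).
    2:{ intros k Hk. apply cs_nSm. lia. }
    rewrite cs_plus. rewrite (cs_nSm (fun r => f r (S j)) 0 j) by lia. ring.
Qed.

Lemma pts_cons (x : nat -> C) a b : (a <= b)%nat -> pts x a b = x a :: pts x (S a) b.
Proof. intros H. unfold pts. replace (S b - a)%nat with (S (b - a)) by lia. simpl.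
  replace (b - a)%nat with (S b - S a)%nat by lia. reflexivity. Qed.
Lemma pts_nil (x : nat -> C) b : pts x (S b) b = [].
Proof. unfold pts. replace (S b - S b)%nat with 0%nat by lia. reflexivity. Qed.
Lemma pts_len (x : nat -> C) a b : length (pts x a b) = (S b - a)%nat.
Proof. unfold pts. rewrite length_map, length_seq. reflexivity. Qed.

Lemma D_ode_neg y L s : CD (fun s => exp_dd (- s) (y :: L)) s (- (y * exp_dd (- s) (y :: L) + exp_dd (- s) L)).
Proof. apply (CD_opp_arg (fun t => exp_dd t (y :: L))). apply D_ode. Qed.

Lemma D_diffble L : Cdiffble (fun t => exp_dd t L).
Proof.
  destruct L as [|y L]; intros t.
  - exists (RtoC 0). apply (CD_ext' (fun _ => RtoC 0) _ _ (RtoC 0)); [apply CD_const| intros; symmetry; apply D_nil| reflexivity].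
  - eexists; apply D_ode.
Qed.

Lemma D_diffble_lin L (c : R) : Cdiffble (fun t => exp_dd (c * t)%R L).
Proof.
  intros t. destruct (D_diffble L (c * t + 0)%R) as [l Hl].
  exists (RtoC c * l). apply (CD_ext' (fun u => exp_dd (c * u + 0)%R L) _ _ (RtoC c * l)).
  apply (CD_comp_lin (fun t => exp_dd t L) c 0 t l Hl). intros u; rewrite Rplus_0_r; reflexivity. reflexivity.
Qed.

Lemma D_zero_pts (x : nat -> C) a b : (a <= b)%nat -> exp_dd 0 (pts x a b) = if (a =? b)%nat then RtoC 1 else RtoC 0.
Proof.
  intros H. rewrite D_zero, pts_len.
  destruct (Nat.eqb_spec a b); destruct (Nat.eqb_spec (S b - a) 1); auto; lia.
Qed.

Open Scope C_scope.

Lemma CS_CD (f : nat -> R -> C) (l : nat -> C) (s : R) (n m : nat) :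
  (forall k, (n <= k <= m)%nat -> CD (f k) s (l k)) ->
  CD (fun u => CS (fun k => f k u) n m) s (CS l n m).
Proof. intros H. unfold CS. apply CD_sum; auto. Qed.

Lemma D_ode_pts (x : nat -> C) a k t : (a <= k)%nat ->
  CD (fun t => exp_dd t (pts x a k)) t (x a * exp_dd t (pts x a k) + exp_dd t (pts x (S a) k)).
Proof. intros H. rewrite (pts_cons x a k H). apply D_ode. Qed.

Lemma D_add (x : nat -> C) b : forall n a, (a + n = S b)%nat -> forall t1 t2,
  exp_dd (t1 + t2)%R (pts x a b) = CS (fun k => exp_dd t1 (pts x a k) * exp_dd t2 (pts x k b)) a b.
Proof.
  induction n as [|n IH]; intros a Ha t1 t2.
  - rewrite Nat.add_0_r in Ha. subst a. rewrite pts_nil, D_nil, cs_empty by lia. reflexivity.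
  - assert (Hab : (a <= b)%nat) by lia.
    set (f := fun t => exp_dd (t + t2)%R (pts x a b) - CS (fun k => exp_dd t (pts x a k) * exp_dd t2 (pts x k b)) a b).
    assert (HD1 : forall t, CD (fun t => exp_dd (t + t2)%R (pts x a b)) t
               (x a * exp_dd (t + t2)%R (pts x a b) + exp_dd (t + t2)%R (pts x (S a) b))).
    { intros t. apply (CD_ext' (fun t => exp_dd (1 * t + t2)%R (pts x a b)) _ _ (RtoC 1 * (x a * exp_dd (1 * t + t2)%R (pts x a b) + exp_dd (1 * t + t2)%R (pts x (S a) b)))).
      - apply (CD_comp_lin (fun t => exp_dd t (pts x a b))). apply D_ode_pts; auto.
      - intros u. rewrite Rmult_1_l. reflexivity.
      - rewrite Rmult_1_l. ring. }
    assert (HD2 : forall t, CD (fun t => CS (fun k => exp_dd t (pts x a k) * exp_dd t2 (pts x k b)) a b) t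
              (CS (fun k => (x a * exp_dd t (pts x a k) + exp_dd t (pts x (S a) k)) * exp_dd t2 (pts x k b)) a b)).
    { intros t. apply CS_CD. intros k Hk.
      eapply (CD_ext' (fun t => exp_dd t (pts x a k) * exp_dd t2 (pts x k b))); [apply CD_mult; [apply D_ode_pts; lia| apply CD_const]| intros; reflexivity| cbv beta; ring]. }
    assert (Hf : forall t, CD f t (x a * f t)).
    { intros t. eapply (CD_ext' (fun t => exp_dd (t + t2)%R (pts x a b) - CS (fun k => exp_dd t (pts x a k) * exp_dd t2 (pts x k b)) a b)); [apply CD_minus; [apply HD1| apply HD2]| intros; reflexivity|].
      unfold f.
      rewrite (cs_ext _ (fun k => x a * (exp_dd t (pts x a k) * exp_dd t2 (pts x k b)) + exp_dd t (pts x (S a) k) * exp_dd t2 (pts x k b))) by (intros; ring).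
      rewrite cs_plus, cs_mult_l. rewrite (cs_Sn (fun k => exp_dd t (pts x (S a) k) * exp_dd t2 (pts x k b))) by lia.
      rewrite pts_nil, D_nil. rewrite <- (IH (S a)) by lia. ring. }
    assert (H0 : f 0%R = 0).
    { unfold f. rewrite Rplus_0_l. rewrite cs_Sn by lia.
      rewrite (cs_zero _ (S a) b).
      - rewrite D_zero_pts by lia. rewrite Nat.eqb_refl. ring.
      - intros k Hk. rewrite D_zero_pts by lia. destruct (Nat.eqb_spec a k); [lia|]. ring. }
    pose proof (ode_unique f (x a) Hf H0 t1) as E. unfold f in E.
    replace (exp_dd (t1 + t2)%R (pts x a b)) with
      (exp_dd (t1 + t2)%R (pts x a b) - CS (fun k => exp_dd t1 (pts x a k) * exp_dd t2 (pts x k b)) a b + CS (fun k => exp_dd t1 (pts x a k) * exp_dd t2 (pts x k b)) a b) by ring.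
    rewrite E. ring.
Qed.

Lemma D_add' (x : nat -> C) a b t1 t2 : (a <= S b)%nat ->
  exp_dd (t1 + t2)%R (pts x a b) = CS (fun k => exp_dd t1 (pts x a k) * exp_dd t2 (pts x k b)) a b.
Proof. intros H. apply (D_add x b (S b - a) a). lia. Qed.

Lemma D_shift (x : nat -> C) b : forall n a, (a + n = S b)%nat -> forall t,
  RtoC t * exp_dd t (pts x a b) = CS (fun m => exp_dd t (pts x a b ++ [x m])) a b.
Proof.
  induction n as [|n IH]; intros a Ha t.
  - rewrite Nat.add_0_r in Ha. subst a. rewrite pts_nil, D_nil, cs_empty by lia. ring.
  - assert (Hab : (a <= b)%nat) by lia.
    set (f := fun t => RtoC t * exp_dd t (pts x a b) - CS (fun m => exp_dd t (pts x a b ++ [x m])) a b).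
    assert (HD2 : forall s, CD (fun t => CS (fun m => exp_dd t (pts x a b ++ [x m])) a b) s
        (CS (fun m => x a * exp_dd s (pts x a b ++ [x m]) + exp_dd s (pts x (S a) b ++ [x m])) a b)).
    { intros s. apply CS_CD. intros m Hm. rewrite (pts_cons x a b Hab). apply D_ode. }
    assert (Hf : forall s, CD f s (x a * f s)).
    { intros s. eapply (CD_ext' (fun t => RtoC t * exp_dd t (pts x a b) - CS (fun m => exp_dd t (pts x a b ++ [x m])) a b)); [apply CD_minus; [apply CD_mult; [apply CD_id| apply D_ode_pts; auto]| apply HD2]| intros; reflexivity|].
      unfold f. rewrite cs_plus, cs_mult_l.
      rewrite (cs_Sn (fun m => exp_dd s (pts x (S a) b ++ [x m]))) by lia.
      rewrite <- (IH (S a)) by lia.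
      rewrite (D_perm s (pts x (S a) b ++ [x a]) (pts x a b)).
      2:{ rewrite (pts_cons x a b Hab). apply Permutation_sym, Permutation_cons_append. }
      ring. }
    assert (H0 : f 0%R = 0).
    { unfold f. rewrite cs_zero. ring. intros k Hk. rewrite D_zero, length_app, pts_len. change (length [x k]) with 1%nat.
      destruct (Nat.eqb_spec (S b - a + 1) 1); [lia| reflexivity]. }
    pose proof (ode_unique f (x a) Hf H0 t) as E. unfold f in E.
    replace (RtoC t * exp_dd t (pts x a b)) with
      (RtoC t * exp_dd t (pts x a b) - CS (fun m => exp_dd t (pts x a b ++ [x m])) a b + CS (fun m => exp_dd t (pts x a b ++ [x m])) a b) by ring.
    rewrite E. ring.
Qed.

Lemma D_shift' (x : nat -> C) a b t : (a <= S b)%nat ->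
  RtoC t * exp_dd t (pts x a b) = CS (fun m => exp_dd t (pts x a b ++ [x m])) a b.
Proof. intros H. apply (D_shift x b (S b - a) a). lia. Qed.

Open Scope C_scope.

Lemma Cdiffble_ext (f g : R -> C) : Cdiffble f -> (forall t, f t = g t) -> Cdiffble g.
Proof. intros H E x. destruct (H x) as [l Hl]. exists l. eapply CD_ext'; eauto. Qed.

Section Core.
Variable x : nat -> C.
Variables j q : nat.
Hypothesis Hjq : (j < q)%nat.

Definition A := pts x (S j) q.
Definition Jf (k : nat) (tau : R) : C := RtoC tau * (exp_dd (- tau) A * exp_dd tau (pts x k j)).
Definition J (k : nat) (s : R) : C := RInt (V:=CR) (Jf k) 0 s.
Definition Lr (r : nat) (s : R) : C := CS (fun k => exp_dd (- s) (pts x r k) * J k s) r j.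
Definition Rr (r : nat) (s : R) : C := CS (fun m => exp_dd (- s) (pts x r q ++ [x m])) (S j) q.

Lemma Jf_diffble k : Cdiffble (Jf k).
Proof.
  unfold Jf. apply Cdiffble_mult.
  - intros t; eexists; apply CD_id.
  - apply Cdiffble_mult.
    + apply (Cdiffble_ext (fun t => exp_dd (-1 * t)%R A)). apply D_diffble_lin.
      intros t. f_equal. ring.
    + apply (Cdiffble_ext (fun t => exp_dd (1 * t)%R (pts x k j))). apply D_diffble_lin.
      intros t. f_equal. ring.
Qed.

Lemma J_CD k s : CD (J k) s (Jf k s).
Proof. unfold J. apply CD_FTC. intros u. apply Cdiffble_cont. apply Jf_diffble. Qed.

Lemma J_0 k : J k 0 = RtoC 0.
Proof. unfold J. exact (RInt_point (V:=CR) 0 (Jf k)). Qed.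

Lemma Dneg_CD r k s : (r <= k)%nat ->
  CD (fun s => exp_dd (- s) (pts x r k)) s (- (x r * exp_dd (- s) (pts x r k) + exp_dd (- s) (pts x (S r) k))).
Proof. intros H. apply (CD_opp_arg (fun t => exp_dd t (pts x r k))). apply D_ode_pts; auto. Qed.

Lemma core_step r : (r <= j)%nat ->
  (forall s, Rr (S r) s - Lr (S r) s + (if (r =? j)%nat then RtoC s * exp_dd (- s) A else RtoC 0) = RtoC 0) ->
  forall s, Rr r s = Lr r s.
Proof.
  intros Hr Hnext s0.
  set (f := fun s => Rr r s - Lr r s).
  assert (dR : forall s, CD (Rr r) s (- (x r * Rr r s + Rr (S r) s))).
  { intros s. unfold Rr. eapply (CD_ext' (fun s => CS (fun m => exp_dd (-s) (pts x r q ++ [x m])) (S j) q)).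
    - apply CS_CD. intros m Hm.
      rewrite (pts_cons x r q) by lia. rewrite <- app_comm_cons.
      apply (CD_opp_arg (fun t => exp_dd t (x r :: (pts x (S r) q ++ [x m])))). apply D_ode.
    - intros; reflexivity.
    - rewrite (cs_ext _ (fun m => RtoC (-1) * (x r * exp_dd (- s) (pts x r q ++ [x m])) + RtoC (-1) * exp_dd (- s) (pts x (S r) q ++ [x m]))).
      2:{ intros m Hm. rewrite (pts_cons x r q) by lia. rewrite <- app_comm_cons. ring. }
      rewrite cs_plus, !cs_mult_l. ring. }
  assert (dL : forall s, CD (Lr r) s (- (x r * Lr r s + Lr (S r) s) + (if (r =? j)%nat then RtoC s * exp_dd (- s) A else RtoC 0))).
  { intros s. unfold Lr. eapply (CD_ext' (fun s => CS (fun k => exp_dd (-s) (pts x r k) * J k s) r j)).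
    - apply CS_CD. intros k Hk.
      apply (CD_mult (fun s => exp_dd (- s) (pts x r k)) (fun s => J k s)); [apply Dneg_CD; lia| apply J_CD].
    - intros; reflexivity.
    - rewrite (cs_ext _ (fun k => RtoC (-1) * (x r * (exp_dd (- s) (pts x r k) * J k s)) + (RtoC (-1) * (exp_dd (- s) (pts x (S r) k) * J k s) + (RtoC s * exp_dd (- s) A) * (exp_dd (- s) (pts x r k) * exp_dd s (pts x k j))))).
      2:{ intros k Hk. unfold Jf. ring. }
      rewrite !cs_plus, !cs_mult_l.
      rewrite (cs_Sn (fun k => exp_dd (- s) (pts x (S r) k) * J k s)) by lia.
      rewrite pts_nil, D_nil.
      rewrite <- D_add' by lia. replace (- s + s)%R with 0%R by ring.
      rewrite D_zero_pts by lia.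
      destruct (Nat.eqb_spec r j); ring. }
  assert (Hf : forall s, CD f s (- x r * f s)).
  { intros s. eapply (CD_ext' (fun s => Rr r s - Lr r s)); [apply CD_minus; [apply dR| apply dL]| intros; reflexivity|].
    unfold f. specialize (Hnext s).
    replace (Rr (S r) s) with (Rr (S r) s - Lr (S r) s + (if (r =? j)%nat then RtoC s * exp_dd (- s) A else RtoC 0) + Lr (S r) s - (if (r =? j)%nat then RtoC s * exp_dd (- s) A else RtoC 0)) by ring.
    rewrite Hnext. ring. }
  assert (H0 : f 0%R = RtoC 0).
  { unfold f, Rr, Lr. rewrite Ropp_0.
    rewrite (cs_zero (fun k => exp_dd 0 (pts x r k) * J k 0)) by (intros; rewrite J_0; ring).
    rewrite cs_zero. ring. intros m Hm. rewrite D_zero, length_app, pts_len. change (length [x m]) with 1%nat.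
    destruct (Nat.eqb_spec (S q - r + 1) 1); [lia| reflexivity]. }
  pose proof (ode_unique f (- x r) Hf H0 s0) as E. unfold f in E.
  replace (Rr r s0) with (Rr r s0 - Lr r s0 + Lr r s0) by ring. rewrite E. ring.
Qed.

Lemma core : forall n r, (r + n = j)%nat -> forall s, Rr r s = Lr r s.
Proof.
  induction n as [|n IH]; intros r Hr.
  - rewrite Nat.add_0_r in Hr. subst r. apply core_step; auto.
    intros s. rewrite Nat.eqb_refl.
    assert (HL : Lr (S j) s = RtoC 0) by (unfold Lr; apply cs_empty; lia).
    rewrite HL. unfold Rr. rewrite <- D_shift' by lia. fold A. replace (RtoC (- s)) with (- RtoC s) by (unfold RtoC, Copp; simpl; f_equal; ring). ring.
  - apply core_step; [lia|]. intros s. rewrite (IH (S r)) by lia.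
    destruct (Nat.eqb_spec r j); [lia|]. ring.
Qed.

End Core.

Open Scope C_scope.

Lemma is_RInt_zero_C (a b : R) : is_RInt (V:=CR) (fun _ => RtoC 0) a b (RtoC 0).
Proof.
  assert (E : scal (V:=CR) (b - a)%R (RtoC 0) = RtoC 0).
  { unfold scal; simpl. unfold prod_scal; simpl. unfold scal; simpl; unfold mult; simpl. unfold RtoC; f_equal; ring. }
  exact (eq_ind _ (fun v => is_RInt (V:=CR) (fun _ => RtoC 0) a b v) (is_RInt_const (V:=CR) a b (RtoC 0)) _ E).
Qed.

Lemma is_RInt_CS (g : nat -> R -> C) (I : nat -> C) (a b : R) (n m : nat) :
  (forall k, (n <= k <= m)%nat -> is_RInt (V:=CR) (g k) a b (I k)) ->
  is_RInt (V:=CR) (fun t => CS (fun k => g k t) n m) a b (CS I n m).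
Proof.
  intros H. induction m as [|m IH].
  - destruct n as [|n].
    + rewrite cs_one. apply (is_RInt_ext_C (g 0%nat)). intros; symmetry; apply cs_one. apply H; lia.
    + rewrite cs_empty by lia. apply (is_RInt_ext_C (fun _ => RtoC 0)). intros; symmetry; apply cs_empty; lia.
      apply is_RInt_zero_C.
  - destruct (le_lt_dec n (S m)) as [Hle|Hlt].
    + rewrite cs_nSm by lia. apply (is_RInt_ext_C (fun t => CS (fun k => g k t) n m + g (S m) t)).
      intros; symmetry; apply cs_nSm; lia.
      apply (is_RInt_plus (V:=CR)); [apply IH; intros; apply H; lia| apply H; lia].
    + rewrite cs_empty by lia. apply (is_RInt_ext_C (fun _ => RtoC 0)). intros; symmetry; apply cs_empty; lia.
      apply is_RInt_zero_C.
Qed.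

Close Scope C_scope.
Open Scope R_scope.

Theorem lemma3 (x : nat -> C) (q j : nat) (beta : R) :
  (1 <= q)%nat -> (j <= q - 1)%nat -> 0 < beta ->
  is_RInt (V := C_R_CompleteNormedModule)
    (fun tau : R =>
       Cmult (RtoC tau)
         (Cmult (exp_dd (- tau) (pts x (S j) q))
                (exp_dd (- (beta - tau)) (pts x 0 j))))
    0 (beta / 2)
    (sum_n_m (G := C_AbelianMonoid)
       (fun r => Cmult (exp_dd (- (beta / 2)) (pts x 0 r))
                   (sum_n_m (G := C_AbelianMonoid)
                      (fun m => exp_dd (- (beta / 2)) (pts x r q ++ [x m]))
                      (S j) q))
       0 j).
Proof.
  intros Hq Hj Hb. assert (Hjq : (j < q)%nat) by lia.
  set (s := beta / 2).
  change (sum_n_m (G := C_AbelianMonoid)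
       (fun r => Cmult (exp_dd (- s) (pts x 0 r)) (sum_n_m (G := C_AbelianMonoid)
                      (fun m => exp_dd (- s) (pts x r q ++ [x m])) (S j) q)) 0 j)
    with (CS (fun r => Cmult (exp_dd (- s) (pts x 0 r)) (Rr x j q r s)) 0 j).
  assert (EV : CS (fun r => Cmult (exp_dd (- s) (pts x 0 r)) (Rr x j q r s)) 0 j =
               CS (fun k => Cmult (exp_dd (- beta) (pts x 0 k)) (J x j q k s)) 0 j).
  { rewrite (cs_ext _ (fun r => CS (fun k => Cmult (exp_dd (- s) (pts x 0 r)) (Cmult (exp_dd (- s) (pts x r k)) (J x j q k s))) r j)).
    2:{ intros r Hr. rewrite (core x j q Hjq (j - r) r) by lia. unfold Lr. rewrite cs_mult_l. reflexivity. }
    rewrite (cs_triangle (fun r k => Cmult (exp_dd (- s) (pts x 0 r)) (Cmult (exp_dd (- s) (pts x r k)) (J x j q k s)))).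
    apply cs_ext. intros k Hk.
    rewrite (cs_ext _ (fun r => Cmult (Cmult (exp_dd (- s) (pts x 0 r)) (exp_dd (- s) (pts x r k))) (J x j q k s))) by (intros; ring).
    rewrite cs_mult_r. rewrite <- D_add' by lia.
    replace (- s + - s) with (- beta) by (unfold s; field). reflexivity. }
  rewrite EV.
  apply (is_RInt_ext_C (fun tau => CS (fun k => Cmult (exp_dd (- beta) (pts x 0 k)) (Jf x j q k tau)) 0 j)).
  - intros tau. unfold Jf.
    replace (- (beta - tau)) with (- beta + tau) by ring.
    rewrite (D_add' x 0 j (- beta) tau) by lia.
    rewrite (cs_ext _ (fun k => Cmult (Cmult (RtoC tau) (exp_dd (- tau) (A x j q))) (Cmult (exp_dd (- beta) (pts x 0 k)) (exp_dd tau (pts x k j))))) by (intros; ring).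
    rewrite cs_mult_l. unfold A. ring.
  - apply is_RInt_CS. intros k Hk. apply is_RInt_Cmult_l.
    unfold J. apply (RInt_correct (V:=CR)). apply Cdiffble_ex_RInt. apply Jf_diffble.
Qed.
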